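(* Let $\{n_j\}_{j\ge1}$ be an infinite sequence of positive integers with $n_j\mid n_{j+1}$ for all $j$. Let $A=\prod_{j=1}^\infty\mathbb{Z}_{n_j}$ with the product topology (each $\mathbb{Z}_{n_j}=\mathbb{Z}/n_j\mathbb{Z}$ discrete), let $E=(1,1,\dots)\in A$, and let $\bar B$ be the closure in $A$ of $\{nE=(n,n,\dots):n\in\mathbb{Z}\}$. For $k\in\mathbb{Z}$ let $b=kE=(k,k,\dots)$. Then $\{nb:n\in\mathbb{Z}\}$ is dense in $\bar B$ if and only if $\gcd(k,n_j)=1$ for every $j$.
   Context: $A$ is a compact abelian group under coordinatewise addition; its product topology is induced by the metric $\mathrm{dist}(x,y)=\sum_{j\ge1}2^{-j}\frac{\delta_j(x_j,y_j)}{1+\delta_j(x_j,y_j)}$ where $\delta_j$ is the discrete metric on $\mathbb{Z}_{n_j}$. An element $b\in\bar B$ is called a generator if $\{nb:n\in\mathbb{Z}\}$ is dense in $\bar B$. *)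

(* Defs.v *)
From mathcomp Require Import all_boot all_order all_algebra.
Set Implicit Arguments. Unset Strict Implicit. Unset Printing Implicit Defensive.
Import Order.TTheory GRing.Theory Num.Theory.
Local Open Scope ring_scope.

(* The group A = prod_{j>=1} Z_{n_j}; coordinates are indexed by j : nat
   (index j here stands for j+1 of the paper). *)
Definition A (n : nat -> nat) : Type := forall j : nat, 'I_(n j).

Definition is_zmul (n : nat -> nat) (z : int) (x y : A n) : Prop :=
  forall j, ((y j : nat)%:Z = (z * (x j : nat)%:Z) %% (n j)%:Z)%Z.

Definition is_kE (n : nat -> nat) (k : int) (y : A n) : Prop :=
  forall j, ((y j : nat)%:Z = k %% (n j)%:Z)%Z.

(* Closure in the product topology (discrete factors), i.e. in the metric
   dist(x,y) = sum_j 2^-j delta_j/(1+delta_j): x is in the closure of S iff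
   for every m some point of S agrees with x on the first m coordinates
   (these cylinder sets form a neighbourhood base of x). *)
Definition in_closure (n : nat -> nat) (S : A n -> Prop) (x : A n) : Prop :=
  forall m : nat, exists y, S y /\ forall j, (j < m)%N -> x j = y j.

Definition Bbar (n : nat -> nat) : A n -> Prop :=
  in_closure (fun y => exists z : int, is_kE z y).

Definition dense_in_Bbar (n : nat -> nat) (b : A n) : Prop :=
  forall x, Bbar x -> in_closure (fun y => exists z : int, is_zmul z b y) x.

(* Main.v *)
Require Import Defs.
From mathcomp Require Import all_boot all_order all_algebra.
From mathcomp Require Import zify ring.
Import Order.TTheory GRing.Theory Num.Theory.
Local Open Scope ring_scope.

Lemma chain_dvd (n : nat -> nat) (hdiv : forall j, (n j %| n j.+1)%N) j i :
  (j <= i)%N -> (n j %| n i)%N.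
Proof.
elim: i => [|i IH]; first by rewrite leqn0 => /eqP ->.
rewrite leq_eqVlt => /orP [/eqP ->//|]; rewrite ltnS => /IH h.
exact: dvdn_trans h (hdiv i).
Qed.

Lemma mod_down (a c : int) (N d : nat) : (d %| N)%N ->
  (a %% N%:Z = c %% N%:Z)%Z -> (a %% d%:Z = c %% d%:Z)%Z.
Proof.
move=> dN /eqP; rewrite eqz_mod_dvd => h; apply/eqP; rewrite eqz_mod_dvd.
apply: dvdz_trans h; by rewrite dvdzE.
Qed.

Lemma modabs (c : int) (d : nat) : (0 < d)%N ->
  ((absz (c %% d%:Z)%Z)%:Z = c %% d%:Z)%Z.
Proof.
move=> d0; rewrite abszE ger0_norm // modz_ge0 //; by rewrite eqz_nat -lt0n.
Qed.

Lemma modabs_lt (c : int) (d : nat) : (0 < d)%N -> (absz (c %% d%:Z)%Z < d)%N.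
Proof.
move=> d0; rewrite -ltz_nat modabs //; apply: ltz_pmod; by rewrite ltz_nat.
Qed.

Theorem proposition4p7 (n : nat -> nat)
  (hpos : forall j, (0 < n j)%N)
  (hdiv : forall j, (n j %| n j.+1)%N)
  (k : int) (b : A n) (hb : is_kE k b) :
  dense_in_Bbar b <-> (forall j, coprimez k (n j)%:Z).
Proof.
split.
- move=> hd j.
  pose e : A n := fun i => Ordinal (ltn_pmod 1 (hpos i)).
  have E1 : Bbar e.
    move=> m; exists e; split => //; exists 1%:Z => i /=; by rewrite -modz_nat.
  have [y [[z Hz] Hy]] := hd e E1 j.+1.
  have := Hy j (ltnSn j); move=> /(congr1 (fun o : 'I_(n j) => (o : nat)%:Z)).
  rewrite Hz hb /= -modz_nat modzMmr => /eqP; rewrite eqz_mod_dvd => /dvdzP [q Hq].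
  apply/coprimezP; exists (z, q) => /=. lia.
- move=> hc x Bx m.
  have [y' [[w Hw] Hx]] := Bx m.
  have [[u v] /= Huv] := coprimezP _ _ (hc m).
  pose z := (u * w)%R.
  pose y : A n := fun i => Ordinal (@modabs_lt (z * (b i : nat)%:Z)%R (n i) (hpos i)).
  exists y; split.
    exists z => i /=; by rewrite modabs.
  move=> j jm; apply: val_inj => /=.
  have h : ((x j : nat)%:Z = (absz ((z * (b j : nat)%:Z) %% (n j)%:Z)%Z)%:Z)%R.
    rewrite modabs // hb modzMmr Hx // Hw; symmetry; apply: (@mod_down _ _ (n m)).
      by apply: chain_dvd => //; apply: ltnW.
    have -> : (z * k = (- (w * v)) * (n m)%:Z + w)%R by rewrite /z; transitivity (w * (u*k + v*(n m)%:Z) - w*v*(n m)%:Z)%R; [ring | rewrite Huv; ring].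
    by rewrite modzMDl.
  by case: h.
Qed.
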